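(* Let $M, K \ge 1$ be integers, let $(\mathcal{U}, (\cdot,\cdot)_{\mathcal{U}})$ be a real Hilbert space with norm $\|\cdot\|_{\mathcal{U}}$, and let $\mathcal{P} \subset \mathbb{R}^{p}$ be a compact set of hyper-parameters. For every $\theta \in \mathcal{P}$ let $a_\theta : \mathcal{U}\times\mathcal{U} \to \mathbb{R}$ be a bounded, coercive bilinear form and $b_\theta : \mathbb{R}^M \times \mathcal{U} \to \mathbb{R}$ a non-trivial (not identically zero) bounded bilinear form, and for $m \in \mathbb{R}^M$ let $u_\theta(m) \in \mathcal{U}$ be the unique solution of $a_\theta(u_\theta(m), \psi) = b_\theta(m,\psi)$ for all $\psi \in \mathcal{U}$. Let $\Sigma_0 \in \mathbb{R}^{M\times M}$ be symmetric positive definite, with $\|m\|_{\Sigma_0^{-1}}^2 := m^T \Sigma_0^{-1} m$, and let $C_{\Sigma_0^{-1}} := \sup_{m \ne 0} \|m\|_2/\|m\|_{\Sigma_0^{-1}}$, where $\|\cdot\|_2$ is the Euclidean norm. Let $L = (l_1,\dots,l_K)^T : \mathcal{U} \to \mathbb{R}^K$ with each $l_k$ a bounded linear functional on $\mathcal{U}$, let $\Sigma_L \in \mathbb{R}^{K\times K}$ be symmetric positive definite with $\|d\|_{\Sigma_L^{-1}}^2 := d^T\Sigma_L^{-1} d$, and let $\sigma > 0$. Fix $\theta \in \mathcal{P}$. Let $G_{\theta,L} \in \mathbb{R}^{K \times M}$ be the matrix of the linear map $m \mapsto L u_\theta(m)$, and define the posterior covariance $$\Sigma_{\mathrm{post}}^{\theta,L}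 := \Big(\tfrac{1}{\sigma^2} G_{\theta,L}^T \Sigma_L^{-1} G_{\theta,L} + \Sigma_0^{-1}\Big)^{-1}.$$ Let $X_\theta := \{m \in \mathbb{R}^M : u_\theta(m) = 0\}$, let $X_\theta^\perp$ be its orthogonal complement in the Euclidean inner product, and let $\Pi$ be the Euclidean orthogonal projection onto $X_\theta^\perp$. Define $$\eta_{\inf} := \inf_{0\neq m \in X_\theta^\perp} \frac{\|u_\theta(m)\|_{\mathcal{U}}}{\|m\|_{\Sigma_0^{-1}}}, \qquad \beta_{\theta,L} := \inf\{\|L u_\theta(m)\|_{\Sigma_L^{-1}} : m \in \mathbb{R}^M,\ \|u_\theta(m)\|_{\mathcal{U}} = 1\}.$$ Let $0 < \lambda_1 \le \dots \le \lambda_M$ be the eigenvalues of $\Sigma_{\mathrm{post}}^{\theta,L}$ (with multiplicity) and $(m_{\lambda_i})_{i=1}^M$ a Euclidean-orthonormal basis of $\mathbb{R}^M$ with $\Sigma_{\mathrm{post}}^{\theta,L} m_{\lambda_i} = \lambda_i m_{\lambda_i}$. Then for each $i = 1,\dots,M$, $$\lambda_i \le \frac{C_{\Sigma_0^{-1}}^2}{\frac{1}{\sigma^2}\beta_{\theta,L}^2\, \eta_{\inf}^2\, \|\Pi m_{\lambda_i}\|_2^2 + 1},$$ and consequently $$\operatorname{trace}(\Sigma_{\mathrm{post}}^{\theta,L}) \le C_{\Sigma_0^{-1}}^2 \sum_{i=1}^M \Big(\tfrac{1}{\sigma^2}\beta_{\theta,L}^2\, \eta_{\inf}^2\, \|\Pi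 m_{\lambda_i}\|_2^2 + 1\Big)^{-1}.$$
   Context: This is the setting of a hyper-parameterized linear Bayesian inverse problem: prior $\mathcal{N}(m_0,\Sigma_0)$ on the parameter $m\in\mathbb{R}^M$, data $d = L u_\theta(m) + \eta$ with noise $\eta \sim \mathcal{N}(0,\sigma^2\Sigma_L)$; $\Sigma_{\mathrm{post}}^{\theta,L}$ is the covariance of the resulting Gaussian posterior. $\beta_{\theta,L}$ is called the observability coefficient. Since $b_\theta$ is non-trivial, $X_\theta^\perp \ne \{0\}$ and $\eta_{\inf} > 0$. *)

(* Defs.v *)
From HB Require Import structures.
From mathcomp Require Import all_boot all_order all_algebra.
From mathcomp Require Import all_classical all_reals all_analysis.
Set Implicit Arguments. Unset Strict Implicit. Unset Printing Implicit Defensive.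
Import Order.TTheory GRing.Theory Num.Theory.
Import numFieldNormedType.Exports.
Local Open Scope ring_scope.
Local Open Scope classical_set_scope.

Section Defs.
Variable R : realType.

Definition edot n (x y : 'cV[R]_n) : R := (x^T *m y) 0 0.
Definition enorm n (x : 'cV[R]_n) : R := Num.sqrt (edot x x).

Definition wnorm n (S : 'M[R]_n) (x : 'cV[R]_n) : R :=
  Num.sqrt ((x^T *m invmx S *m x) 0 0).

Definition sym_posdef n (S : 'M[R]_n) : Prop :=
  S^T = S /\ forall x : 'cV[R]_n, x != 0 -> 0 < (x^T *m S *m x) 0 0.

Definition inner_product_of_norm (U : normedModType R) (ip : U -> U -> R) : Prop :=
  (forall x y, ip x y = ip y x) /\
  (forall x y z, ip (x + y) z = ip x z + ip y z) /\
  (forall (c : R) x y, ip (c *: x) y = c * ip x y) /\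
  (forall x, ip x x = `|x| ^+ 2).

Definition bilinear_form (V W : lmodType R) (f : V -> W -> R) : Prop :=
  (forall x1 x2 y, f (x1 + x2) y = f x1 y + f x2 y) /\
  (forall (c : R) x y, f (c *: x) y = c * f x y) /\
  (forall x y1 y2, f x (y1 + y2) = f x y1 + f x y2) /\
  (forall (c : R) x y, f x (c *: y) = c * f x y).

Definition bounded_bilinear_U (U : normedModType R) (a : U -> U -> R) : Prop :=
  bilinear_form a /\ exists C : R, 0 < C /\ forall x y, `|a x y| <= C * `|x| * `|y|.

Definition coercive (U : normedModType R) (a : U -> U -> R) : Prop :=
  exists alpha : R, 0 < alpha /\ forall x, alpha * `|x| ^+ 2 <= a x x.

Definition bounded_bilinear_MU M (U : normedModType R) (b : 'cV[R]_M -> U -> R) : Prop :=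
  bilinear_form b /\ exists C : R, 0 < C /\ forall m y, `|b m y| <= C * enorm m * `|y|.

Definition nontrivial_form M (U : Type) (b : 'cV[R]_M -> U -> R) : Prop :=
  exists m y, b m y != 0.

Definition bounded_linear_obs K (U : normedModType R) (L : U -> 'cV[R]_K) : Prop :=
  (forall x y, L (x + y) = L x + L y) /\
  (forall (c : R) x, L (c *: x) = c *: L x) /\
  (forall k : 'I_K, exists C : R, 0 < C /\ forall x, `|L x k 0| <= C * `|x|).

Definition C_Sigma M (S0 : 'M[R]_M) : R :=
  sup [set enorm m / wnorm S0 m | m in [set m : 'cV[R]_M | m != 0]].

Definition Gmat K M (U : Type) (L : U -> 'cV[R]_K) (u : 'cV[R]_M -> U) : 'M[R]_(K, M) :=
  \matrix_(k < K, j < M) (L (u (delta_mx j 0))) k 0.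

Definition Sigma_post K M (G : 'M[R]_(K, M)) (SL : 'M[R]_K) (S0 : 'M[R]_M) (sigma : R)
  : 'M[R]_M :=
  invmx ((sigma ^+ 2)^-1 *: (G^T *m invmx SL *m G) + invmx S0).

Definition Xker M (U : zmodType) (u : 'cV[R]_M -> U) : set 'cV[R]_M :=
  [set m | u m = 0].
Definition orth_compl M (X : set 'cV[R]_M) : set 'cV[R]_M :=
  [set y | forall x, X x -> edot y x = 0].

Definition is_orth_proj M (Y : set 'cV[R]_M) (Pi : 'cV[R]_M -> 'cV[R]_M) : Prop :=
  forall m, Y (Pi m) /\ forall y, Y y -> edot (m - Pi m) y = 0.

Definition eta_inf M (U : normedModType R) (S0 : 'M[R]_M) (u : 'cV[R]_M -> U) : R :=
  inf [set `|u m| / wnorm S0 m |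
        m in [set m | orth_compl (Xker u) m /\ m != 0]].

Definition beta_obs K M (U : normedModType R) (L : U -> 'cV[R]_K) (SL : 'M[R]_K)
  (u : 'cV[R]_M -> U) : R :=
  inf [set wnorm SL (L (u m)) | m in [set m : 'cV[R]_M | `|u m| = 1]].

End Defs.

(* Main.v *)
Require Import Defs.
From HB Require Import structures.
From mathcomp Require Import all_boot all_order all_algebra.
From mathcomp Require Import all_classical all_reals all_analysis.
From mathcomp Require Import ring lra.
Set Implicit Arguments. Unset Strict Implicit. Unset Printing Implicit Defensive.
Import Order.TTheory GRing.Theory Num.Theory.
Import numFieldNormedType.Exports.
Local Open Scope ring_scope.
Local Open Scope classical_set_scope.
Lemma cV_sum (R : realType) n (x : 'cV[R]_n) :
  x = \sum_(j < n) x j 0 *: delta_mx j 0.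
Proof. by rewrite {1}(matrix_sum_delta x); apply eq_bigr => j _; rewrite big_ord1. Qed.

Lemma lin_sum (R : realType) n (V : lmodType R) (f : 'cV[R]_n -> V)
  (fD : forall x y, f (x + y) = f x + f y) (fZ : forall (c : R) x, f (c *: x) = c *: f x)
  (x : 'cV[R]_n) : f x = \sum_(j < n) x j 0 *: f (delta_mx j 0).
Proof.
have f0 : f 0 = 0 by rewrite -(scale0r (0 : 'cV[R]_n)) fZ scale0r.
rewrite {1}(cV_sum x) (big_morph f fD f0); apply eq_bigr => j _; exact: fZ.
Qed.

Lemma Gmul (R : realType) K M (U : lmodType R) (L : U -> 'cV[R]_K) (u : 'cV[R]_M -> U)
  (fD : forall x y, L (u (x + y)) = L (u x) + L (u y))
  (fZ : forall (c : R) x, L (u (c *: x)) = c *: L (u x)) (x : 'cV[R]_M) :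
  Gmat L u *m x = L (u x).
Proof.
apply/matrixP => k j; rewrite (ord1 j) !mxE.
rewrite (lin_sum fD fZ x) summxE; apply eq_bigr => i _.
by rewrite !mxE mulrC.
Qed.

Lemma inj_a (R : realType) (U : normedModType R) (a : U -> U -> R) :
  bilinear_form a -> coercive a -> forall x y, (forall z, a x z = a y z) -> x = y.
Proof.
move=> [ad [hom _]] [al [al0 Hc]] x y H.
have h0 : a (x - y) (x - y) = 0.
  by rewrite ad -scaleN1r hom H mulN1r subrr.
have := Hc (x - y); rewrite h0 => h.
have : `|x - y| ^+ 2 <= 0.
  by rewrite -(pmulr_rle0 _ al0).
rewrite -[_ <= 0]/(_ <= 0) => h2.
have : `|x - y| = 0.
  have := normr_ge0 (x - y); nra.
by move/normr0_eq0/eqP; rewrite subr_eq0 => /eqP.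
Qed.

Lemma edotE (R : realType) n (x y : 'cV[R]_n) : edot x y = \sum_i x i 0 * y i 0.
Proof. by rewrite /edot !mxE; apply eq_bigr => i _; rewrite mxE. Qed.

Lemma edotC (R : realType) n (x y : 'cV[R]_n) : edot x y = edot y x.
Proof. by rewrite !edotE; apply eq_bigr => i _; rewrite mulrC. Qed.

Lemma edot_ge0 (R : realType) n (x : 'cV[R]_n) : 0 <= edot x x.
Proof. by rewrite edotE sumr_ge0 // => i _; rewrite -expr2 sqr_ge0. Qed.

Lemma edot_eq0 (R : realType) n (x : 'cV[R]_n) : edot x x = 0 -> x = 0.
Proof.
rewrite edotE => /eqP; rewrite psumr_eq0; last by move=> i _; rewrite -expr2 sqr_ge0.
move/allP => H; apply/matrixP => i j; rewrite (ord1 j) mxE.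
by have := H i (mem_index_enum _); rewrite /= mulf_eq0 orbb => /eqP.
Qed.

Lemma enorm_sq (R : realType) n (x : 'cV[R]_n) : enorm x ^+ 2 = edot x x.
Proof. by rewrite /enorm sqr_sqrtr // edot_ge0. Qed.

Definition Bf (R : realType) n (S : 'M[R]_n) (x y : 'cV[R]_n) : R := (x^T *m S *m y) 0 0.

Lemma BfDl (R : realType) n (S : 'M[R]_n) x y z : Bf S (x + y) z = Bf S x z + Bf S y z.
Proof. by rewrite /Bf linearD /= !mulmxDl mxE. Qed.
Lemma BfZl (R : realType) n (S : 'M[R]_n) (c : R) x z : Bf S (c *: x) z = c * Bf S x z.
Proof. by rewrite /Bf linearZ /= -!scalemxAl mxE. Qed.
Lemma BfDr (R : realType) n (S : 'M[R]_n) x y z : Bf S z (x + y) = Bf S z x + Bf S z y.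
Proof. by rewrite /Bf !mulmxDr mxE. Qed.
Lemma BfZr (R : realType) n (S : 'M[R]_n) (c : R) x z : Bf S z (c *: x) = c * Bf S z x.
Proof. by rewrite /Bf -!scalemxAr mxE. Qed.
Lemma BfC (R : realType) n (S : 'M[R]_n) x y : S^T = S -> Bf S x y = Bf S y x.
Proof.
move=> hS; have -> : Bf S y x = ((y^T *m S *m x)^T) 0 0 by rewrite mxE.
by rewrite /Bf !trmx_mul trmxK hS mulmxA.
Qed.

Lemma pd_unit (R : realType) n (S : 'M[R]_n) : sym_posdef S -> S \in unitmx.
Proof.
move=> [_ Hp]; rewrite unitmxE unitfE; apply/negP => /det0P [w w0 wS].
have wT : w^T != 0 by apply: contra w0 => /eqP h; rewrite -(trmxK w) h linear0.
have := Hp _ wT; rewrite trmxK wS mul0mx mxE.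
by rewrite ltxx.
Qed.

Lemma pd_inv (R : realType) n (S : 'M[R]_n) : sym_posdef S -> sym_posdef (invmx S).
Proof.
move=> hS; have uS := pd_unit hS; case: hS => hT Hp; split.
  by rewrite trmx_inv hT.
move=> x x0; set y := invmx S *m x.
have xE : x = S *m y by rewrite /y mulKVmx.
have y0 : y != 0 by apply: contra x0 => /eqP h; rewrite xE h mulmx0.
have := Hp _ y0; congr (_ < _).
by rewrite /y trmx_mul trmx_inv hT -!mulmxA mulKVmx.
Qed.

Lemma Bf_ge0 (R : realType) n (S : 'M[R]_n) x : sym_posdef S -> 0 <= Bf S x x.
Proof.
move=> [_ Hp]; have [->|x0] := eqVneq x 0; last exact/ltW/Hp.
by rewrite /Bf mulmx0 mxE.
Qed.

Lemma CS (R : realType) n (S : 'M[R]_n) x y : sym_posdef S -> y != 0 ->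
  Bf S x y ^+ 2 <= Bf S x x * Bf S y y.
Proof.
move=> hS y0; have ha : 0 < Bf S y y by case: hS => _ Hp; exact: Hp.
have := Bf_ge0 (Bf S y y *: x + (- Bf S x y) *: y) hS.
rewrite !(BfDl, BfDr, BfZl, BfZr) (BfC y x) //; last by case: hS.
set a := Bf S y y; set b := Bf S x y; set c := Bf S x x => h.
have : 0 <= a * (a * c - b ^+ 2) by move: h; nra.
by rewrite pmulr_rge0 // subr_ge0 mulrC.
Qed.

Lemma sqr_le_edot (R : realType) n (m : 'cV[R]_n) i : m i 0 ^+ 2 <= edot m m.
Proof.
rewrite edotE (bigD1 i) //= -expr2 lerDl sumr_ge0 // => j _.
by rewrite -expr2 sqr_ge0.
Qed.

Lemma qf_le (R : realType) n (S : 'M[R]_n) m :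
  Bf S m m <= (\sum_j \sum_i `|S i j|) * edot m m.
Proof.
rewrite /Bf mxE mulr_suml; apply: ler_sum => j _.
rewrite mxE !mulr_suml; apply: ler_sum => i _; rewrite mxE.
have hi := sqr_le_edot m i; have hj := sqr_le_edot m j.
have h1 : `|m i 0 * m j 0| <= edot m m.
  rewrite normrM; have := normr_ge0 (m i 0); have := normr_ge0 (m j 0).
  move: hi hj; rewrite -(real_normK (num_real (m i 0))) -(real_normK (num_real (m j 0))).
  nra.
have := ler_norm (m i 0 * S i j * m j 0).
rewrite mulrAC normrM mulrC => h; apply: (le_trans h).
rewrite mulrC; apply: ler_wpM2l => //.
Qed.

Lemma C_props (R : realType) n (S0 : 'M[R]_n) : sym_posdef S0 -> (0 < n)%N ->
  0 < C_Sigma S0 /\ forall m, enorm m <= C_Sigma S0 * wnorm S0 m.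
Proof.
move=> hS n0.
have hI := pd_inv hS.
set c := \sum_j \sum_i `|S0 i j|.
have c0 : 0 <= c by apply: sumr_ge0 => j _; apply: sumr_ge0 => i _.
have key : forall m : 'cV[R]_n, m != 0 -> enorm m / wnorm S0 m <= 1 + c.
  move=> m m0.
  have uS := pd_unit hS.
  have y0 : S0 *m m != 0.
    by apply: contra m0 => /eqP h; rewrite -(mulKmx uS m) h mulmx0.
  have := CS m hI y0.
  have -> : Bf (invmx S0) m (S0 *m m) = edot m m.
    by rewrite /Bf /edot -mulmxA (mulmxA (invmx S0)) mulVmx // mul1mx.
  have -> : Bf (invmx S0) (S0 *m m) (S0 *m m) = Bf S0 m m.
    rewrite /Bf trmx_mul (proj1 hS) -!mulmxA (mulmxA (invmx S0)) mulVmx // mul1mx.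
    by rewrite mulmxA.
  have hq := qf_le S0 m; rewrite -/c in hq.
  have e0 : 0 < edot m m.
    rewrite lt_def edot_ge0 andbT; apply/eqP => /edot_eq0 h; by rewrite h eqxx in m0.
  have w0 : 0 < Bf (invmx S0) m m by case: hI => _ Hp; exact: Hp.
  move=> h.
  have h2 : edot m m <= c * Bf (invmx S0) m m.
    have : edot m m * edot m m <= (Bf (invmx S0) m m * c) * edot m m.
      rewrite -expr2; apply: (le_trans h); rewrite -mulrA; apply: ler_wpM2l => //.
      exact: ltW.
    by rewrite ler_pM2r // mulrC.
  have wn : wnorm S0 m = Num.sqrt (Bf (invmx S0) m m) by [].
  have en : enorm m = Num.sqrt (edot m m) by [].
  have wp : 0 < wnorm S0 m by rewrite wn sqrtr_gt0.
  rewrite ler_pdivrMr //.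
  have hr : enorm m ^+ 2 <= c * wnorm S0 m ^+ 2.
    by rewrite wn en !sqr_sqrtr // ltW.
  have := sqrtr_ge0 (edot m m); rewrite -en => eg.
  set e := enorm m in hr eg *; set w := wnorm S0 m in hr wp *.
  have [ew|we] := leP e w; first nra.
  have : e * w <= c * w * w by nra.
  rewrite ler_pM2r // => h3; nra.
have hub : has_ubound [set enorm m / wnorm S0 m | m in [set m : 'cV[R]_n | m != 0]].
  by exists (1 + c) => _ [m m0 <-]; exact: key.
have ub := ub_le_sup hub.
case: n n0 S0 hS hI c c0 key hub ub => // n _ S0 hS hI c c0 key hub ub.
have e0 : (delta_mx (@ord0 n) (@ord0 0) : 'cV[R]_n.+1) != 0.
  apply/negP => /eqP /matrixP /(_ ord0 ord0); rewrite !mxE !eqxx /=.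
  by move/eqP; rewrite oner_eq0.
have pos : forall m : 'cV[R]_n.+1, m != 0 -> 0 < enorm m / wnorm S0 m.
  move=> m m0; apply: divr_gt0.
    rewrite sqrtr_gt0 lt_def edot_ge0 andbT; apply/eqP => /edot_eq0 h; by rewrite h eqxx in m0.
  rewrite sqrtr_gt0; case: hI => _ Hp; exact: Hp.
have Cp : 0 < C_Sigma S0.
  apply: (lt_le_trans (pos _ e0)); apply: ub; by exists (delta_mx ord0 ord0).
split => // m.
have [->|m0] := eqVneq m 0.
  rewrite /enorm /edot mulmx0 mxE sqrtr0; apply: mulr_ge0; [exact: ltW | exact: sqrtr_ge0].
have wp : 0 < wnorm S0 m by rewrite sqrtr_gt0; case: hI => _ Hp; exact: Hp.
rewrite -ler_pdivrMr //; apply: ub; by exists m.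
Qed.

Lemma wnormZ (R : realType) n (S : 'M[R]_n) (c : R) x :
  wnorm S (c *: x) = `|c| * wnorm S x.
Proof.
rewrite /wnorm -/(Bf _ _ _) -/(Bf _ _ _) BfZl BfZr mulrA -expr2 sqrtrM ?sqr_ge0 //.
by rewrite sqrtr_sqr.
Qed.

Lemma BfA (R : realType) K n (G : 'M[R]_(K, n)) (B : 'M[R]_K) (S : 'M[R]_n) (c : R) x :
  Bf (c *: (G^T *m B *m G) + S) x x = c * Bf B (G *m x) (G *m x) + Bf S x x.
Proof.
rewrite /Bf mulmxDr mulmxDl -scalemxAr -scalemxAl mxE mxE.
by rewrite trmx_mul !mulmxA.
Qed.

Lemma inf_props (R : realType) (E : set R) z :
  (forall y, E y -> 0 <= y) -> E z -> 0 <= inf E /\ inf E <= z.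
Proof.
move=> H Ez; split; first by apply: lb_le_inf; [exists z | exact: H].
by apply: ge_inf => //; exists 0; exact: H.
Qed.

Lemma wnorm_sq (R : realType) n (S : 'M[R]_n) x : sym_posdef S ->
  wnorm S x ^+ 2 = Bf (invmx S) x x.
Proof. by move=> hS; rewrite /wnorm sqr_sqrtr //; apply: Bf_ge0; exact: pd_inv. Qed.
Theorem mainTheorem1 (R : realType) (M K p : nat) (HM : (1 <= M)%N) (HK : (1 <= K)%N)
  (U : completeNormedModType R) (ipU : U -> U -> R) (HipU : inner_product_of_norm ipU)
  (P : set 'rV[R]_p) (HP : compact P)
  (a : 'rV[R]_p -> U -> U -> R) (b : 'rV[R]_p -> 'cV[R]_M -> U -> R)
  (Ha : forall th, P th -> bounded_bilinear_U (a th) /\ coercive (a th))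
  (Hb : forall th, P th -> bounded_bilinear_MU (b th) /\ nontrivial_form (b th))
  (u : 'rV[R]_p -> 'cV[R]_M -> U)
  (Hu : forall th, P th -> forall m psi, a th (u th m) psi = b th m psi)
  (S0 : 'M[R]_M) (HS0 : sym_posdef S0)
  (L : U -> 'cV[R]_K) (HL : bounded_linear_obs L)
  (SL : 'M[R]_K) (HSL : sym_posdef SL)
  (sigma : R) (Hsigma : 0 < sigma)
  (th : 'rV[R]_p) (Hth : P th)
  (Pi : 'cV[R]_M -> 'cV[R]_M) (HPi : is_orth_proj (orth_compl (Xker (u th))) Pi)
  (lam : 'I_M -> R) (v : 'I_M -> 'cV[R]_M)
  (Hsorted : forall i j : 'I_M, (i <= j)%N -> lam i <= lam j)
  (Horth : forall i j : 'I_M, edot (v i) (v j) = (i == j)%:R)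
  (Heig : forall i : 'I_M,
     Sigma_post (Gmat L (u th)) SL S0 sigma *m v i = lam i *: v i) :
  let Sp := Sigma_post (Gmat L (u th)) SL S0 sigma in
  let C := C_Sigma S0 in
  let beta := beta_obs L SL (u th) in
  let eta := eta_inf S0 (u th) in
  (forall i : 'I_M,
     lam i <= C ^+ 2 /
       ((sigma ^+ 2)^-1 * beta ^+ 2 * eta ^+ 2 * enorm (Pi (v i)) ^+ 2 + 1)) /\
  \tr Sp <= C ^+ 2 *
    \sum_(i < M) ((sigma ^+ 2)^-1 * beta ^+ 2 * eta ^+ 2 * enorm (Pi (v i)) ^+ 2 + 1)^-1.
Proof.
move=> Sp C beta eta.
have [[abil _] acoer] := Ha th Hth.
have [[bbil _] _] := Hb th Hth.
have [LD [LZ _]] := HL.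
have [ipC [ipD [ipZ ipN]]] := HipU.
case: (abil) => aD [aZ _]; case: (bbil) => bD [bZ _].
have uD : forall x y, u th (x + y) = u th x + u th y.
  move=> x y; apply: (inj_a abil acoer) => z.
  by rewrite aD !(Hu th Hth); apply: bD.
have uZ : forall (c : R) x, u th (c *: x) = c *: u th x.
  move=> c x; apply: (inj_a abil acoer) => z.
  by rewrite aZ !(Hu th Hth); apply: bZ.
have u0 : u th 0 = 0 by rewrite -(scale0r (0 : 'cV[R]_M)) uZ scale0r.
have Gm : forall x, Gmat L (u th) *m x = L (u th x).
  by apply: Gmul => [x y|c x]; rewrite ?uD ?LD ?uZ ?LZ.
have ip0 : forall z, ipU 0 z = 0.
  by move=> z; have := ipD 0 0 z; rewrite addr0; lra.
have ipsum : forall x z, ipU (u th x) z = \sum_i x i 0 * ipU (u th (delta_mx i 0)) z.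
  move=> x z; rewrite (lin_sum uD uZ x).
  rewrite (big_morph (fun y => ipU y z) (fun y1 y2 => ipD y1 y2 z) (ip0 z)).
  by apply: eq_bigr => i _; rewrite ipZ.
have uPi : forall m, u th (m - Pi m) = 0.
  move=> m; have [_ hw] := HPi m; set w := m - Pi m.
  set g := \col_i ipU (u th (delta_mx i 0)) (u th w).
  have gY : orth_compl (Xker (u th)) g.
    move=> x hx; rewrite edotC edotE.
    have -> : \sum_i x i 0 * g i 0 = ipU (u th x) (u th w).
      by rewrite ipsum; apply: eq_bigr => i _; rewrite mxE.
    by rewrite hx ip0.
  have := hw _ gY; rewrite edotE.
  have -> : \sum_i w i 0 * g i 0 = ipU (u th w) (u th w).
    by rewrite [RHS]ipsum; apply: eq_bigr => i _; rewrite /g mxE.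
  rewrite ipN => /eqP; rewrite sqrf_eq0 normr_eq0 => /eqP //.
have uvPi : forall m, u th m = u th (Pi m).
  by move=> m; rewrite -{1}(subrK (Pi m) m) uD uPi add0r.
have [Cp Cb] := C_props HS0 HM.
have HSLi := pd_inv HSL; have HS0i := pd_inv HS0.
set s := (sigma ^+ 2)^-1.
have s0 : 0 < s by rewrite invr_gt0 exprn_gt0.
set G := Gmat L (u th).
set A := s *: (G^T *m invmx SL *m G) + invmx S0.
have hA : sym_posdef A.
  split.
    rewrite /A linearD linearZ /= !trmx_mul trmxK trmx_inv (proj1 HSL) trmx_inv (proj1 HS0).
    by rewrite mulmxA.
  move=> x x0; rewrite -/(Bf _ _ _) BfA.
  apply: ltr_wpDl; first by apply: mulr_ge0; [exact: ltW | exact: Bf_ge0].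
  by case: HS0i => _ Hp; exact: Hp.
have uA := pd_unit hA.
have Hi : forall i, lam i <= C ^+ 2 / (s * beta ^+ 2 * eta ^+ 2 * enorm (Pi (v i)) ^+ 2 + 1).
  move=> i.
  set X := s * beta ^+ 2 * eta ^+ 2 * enorm (Pi (v i)) ^+ 2.
  have ev : edot (v i) (v i) = 1 by rewrite Horth eqxx.
  have lq : lam i * Bf A (v i) (v i) = 1.
    have : v i = lam i *: (A *m v i).
      by rewrite scalemxAr -Heig /Sp /Sigma_post -/G -/s -/A mulKVmx.
    move=> h; rewrite -ev /edot; transitivity (((v i)^T *m (lam i *: (A *m v i))) 0 0); last by rewrite -h.
    by rewrite -scalemxAr mxE /Bf mulmxA.
  have qpos : 0 < Bf A (v i) (v i).
    case: hA => _ Hp; apply: Hp; apply/negP => /eqP h.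
    by move: ev; rewrite h /edot mulmx0 mxE => /eqP; rewrite eq_sym oner_eq0.
  set wL := wnorm SL (L (u th (v i))).
  have wL0 : 0 <= wL by exact: sqrtr_ge0.
  have hX : X <= C ^+ 2 * s * wL ^+ 2.
    have [P0|P0] := eqVneq (Pi (v i)) 0.
      rewrite /X P0 /enorm /edot mulmx0 mxE sqrtr0 expr0n /= mulr0.
      by apply: mulr_ge0; [apply: mulr_ge0; [exact: sqr_ge0 | exact: ltW] | exact: sqr_ge0].
    have PY := proj1 (HPi (v i)).
    have uP0 : u th (Pi (v i)) != 0.
      apply/negP => /eqP h; move/eqP: P0; apply; apply: edot_eq0; exact: PY.
    have uv0 : u th (v i) != 0 by rewrite uvPi.
    have wP : 0 < wnorm S0 (Pi (v i)).
      by rewrite sqrtr_gt0; case: HS0i => _ Hp; exact: Hp.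
    have [eta0 etab] : 0 <= eta /\ eta <= `|u th (Pi (v i))| / wnorm S0 (Pi (v i)).
      apply: inf_props; last by exists (Pi (v i)).
      move=> _ [m [_ m0] <-]; apply: divr_ge0 => //; exact: sqrtr_ge0.
    have e1 : eta * wnorm S0 (Pi (v i)) <= `|u th (v i)|.
      by rewrite uvPi -ler_pdivlMr.
    set t := `|u th (v i)|^-1.
    have nu0 : 0 < `|u th (v i)| by rewrite normr_gt0.
    have t0 : 0 < t by rewrite invr_gt0.
    have [beta0 betab] : 0 <= beta /\ beta <= wnorm SL (L (u th (t *: v i))).
      apply: inf_props; last first.
        exists (t *: v i); last by rewrite uZ.
        by rewrite /= uZ normrZ gtr0_norm // mulVf // gt_eqF.
      move=> _ [m _ <-]; exact: sqrtr_ge0.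
    rewrite uZ LZ wnormZ gtr0_norm // -/wL in betab.
    have b1 : beta * `|u th (v i)| <= wL by rewrite -ler_pdivlMr // mulrC.
    have e2 := Cb (Pi (v i)).
    have en0 : 0 <= enorm (Pi (v i)) by exact: sqrtr_ge0.
    have k1 : eta * enorm (Pi (v i)) <= C * `|u th (v i)|.
      apply: (le_trans (ler_wpM2l eta0 e2)); rewrite mulrCA; apply: ler_wpM2l => //; exact: ltW.
    have k2 : beta * eta * enorm (Pi (v i)) <= C * wL.
      rewrite -mulrA; apply: (le_trans (ler_wpM2l beta0 k1)); rewrite mulrCA; apply: ler_wpM2l => //; exact: ltW.
    have k3 : (beta * eta * enorm (Pi (v i))) ^+ 2 <= (C * wL) ^+ 2.
      have p1 : 0 <= beta * eta * enorm (Pi (v i)) by rewrite !mulr_ge0.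
      have p2 : 0 <= C * wL by rewrite mulr_ge0 // ltW.
      by apply: lerXn2r; rewrite ?nnegrE.
    have eX1 : X = s * (beta ^+ 2 * eta ^+ 2 * enorm (Pi (v i)) ^+ 2) by rewrite /X; ring.
    have eX2 : C ^+ 2 * s * wL ^+ 2 = s * (C ^+ 2 * wL ^+ 2) by ring.
    rewrite eX1 eX2; move: k3; rewrite !exprMn => k3. by rewrite ler_pM2l.
  have hq : X + 1 <= C ^+ 2 * Bf A (v i) (v i).
    rewrite BfA -(wnorm_sq _ HSL) -(wnorm_sq _ HS0) Gm -/wL mulrDr.
    apply: lerD; first by rewrite mulrA.
    have := Cb (v i); rewrite -[1]ev -enorm_sq => h.
    rewrite -exprMn; apply: lerXn2r; rewrite ?nnegrE //; [exact: sqrtr_ge0 | apply: mulr_ge0; [exact: ltW | exact: sqrtr_ge0]].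
  have X1 : 0 < X + 1.
    apply: ltr_wpDl => //; rewrite /X; apply: mulr_ge0; last exact: sqr_ge0.
    apply: mulr_ge0; last exact: sqr_ge0; apply: mulr_ge0; [exact: ltW | exact: sqr_ge0].
  have -> : lam i = (Bf A (v i) (v i))^-1.
    by rewrite -(mulfK (negbT (gt_eqF qpos)) (lam i)) lq mul1r.
  by rewrite ler_pdivlMr // mulrC ler_pdivrMr // mul1r mulrC.
split => //.
have tr : \tr Sp = \sum_i lam i.
  set V : 'M[R]_M := \matrix_(k, j) v j k 0.
  have VtV : V^T *m V = 1%:M.
    apply/matrixP => i j; rewrite !mxE -Horth edotE; apply: eq_bigr => k _.
    by rewrite !mxE.
  have VVt := mulmx1C VtV.
  have -> : \tr Sp = \tr (V^T *m (Sp *m V)) by rewrite mxtrace_mulC -mulmxA VVt mulmx1.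
  rewrite /mxtrace; apply: eq_bigr => i _; rewrite mxE.
  transitivity (\sum_k v i k 0 * (lam i * v i k 0)).
    apply: eq_bigr => k _; rewrite !mxE; congr (_ * _).
    have := congr1 (fun X : 'cV[R]_M => X k 0) (Heig i); rewrite !mxE => <-.
    by apply: eq_bigr => l _; rewrite mxE.
  have h : \sum_k v i k 0 * v i k 0 = 1 by rewrite -edotE Horth eqxx.
  rewrite -[RHS]mulr1 -h mulr_sumr.
  by apply: eq_bigr => k _; ring.
rewrite tr mulr_sumr; apply: ler_sum => i _; exact: Hi.
Qed.
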